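(* Let $\mathcal F=(F_n)_{n\in\mathbb N}$ be an indexed family. If there are $A,B\in\mathcal F$ with $A\neq B$ and $A\cap B\neq\emptyset$, then $\mathcal F$ is not PRT-learnable.
   Context: An indexed family is a sequence $\mathcal F=(F_n)_{n\in\mathbb N}$ of subsets of $\mathbb N$ that is uniformly computably enumerable (the set $\{\langle a,i\rangle : a\in F_i\}$ is c.e.); a set may occur with several indices, and $F\in\mathcal F$ means $F=F_n$ for some $n$. The minimal index $\mathrm{mi}_{\mathcal F}(F)$ is the least $n$ with $F_n=F$. An enumeration of a nonempty set $A$ is an infinite sequence of elements of $A$ in which every element of $A$ occurs; $f\restriction n$ denotes the initial segment of length $n$. A learner is a partial computable function from finite strings of natural numbers to natural numbers (hypotheses); hypothesis $h$ is interpreted as $F_h$. $M$ converges to a correct index on an enumeration $f$ of $F$ if there is $i$ with $M(f\restriction j)=M(f\restriction i)$ for all $j\ge i$ and $F_{M(f\restriction i)}=F$. $\mathcal F$ is PRT-learnable if there are a learner $M$ and a polynomial $p$ such that for every $F\in\mathcal F$ and every enumeration $f$ of $F$, $M$ converges to a correct index on $f$ in fewer than $p(\mathrm{mi}_{\mathcal F}(F))$ computation steps. *)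

(* Defs.v *)
From mathcomp Require Import all_boot.
Set Implicit Arguments. Unset Strict Implicit. Unset Printing Implicit Defensive.

Inductive instr : Type :=
| Inc (r : nat)
| Jzdec (r : nat) (j : nat).

Definition prog := seq instr.

Definition state := (nat * (nat -> nat))%type.

Definition upd (g : nat -> nat) (r v : nat) : nat -> nat :=
  fun k => if k == r then v else g k.

Definition step (P : prog) (s : state) : option state :=
  let: (pc, g) := s in
  match onth P pc with
  | None => None
  | Some (Inc r) => Some (pc.+1, upd g r (g r).+1)
  | Some (Jzdec r j) =>
      if g r == 0 then Some (j, g) else Some (pc.+1, upd g r (g r).-1)
  end.

Fixpoint exec (P : prog) (t : nat) (s : state) : state :=
  match t with
  | 0 => s
  | t'.+1 => match step P s with None => s | Some s' => exec P t' s' end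
  end.

Definition halted (P : prog) (s : state) : Prop := step P s = None.

Definition init (x : nat) : state := (0, fun k => if k == 0 then x else 0).

Definition runs_in (P : prog) (x y t : nat) : Prop :=
  halted P (exec P t (init x)) /\
  (forall t', t' < t -> ~ halted P (exec P t' (init x))) /\
  (exec P t (init x)).2 0 = y.

Definition halts_on (P : prog) (x : nat) : Prop := exists t y, runs_in P x y t.

(* Cantor pairing <a, b> *)
Definition cpair (a b : nat) : nat := ((a + b) * (a + b).+1)./2 + b.

Fixpoint code_seq (s : seq nat) : nat :=
  match s with
  | [::] => 0
  | a :: s' => (cpair a (code_seq s')).+1
  end.

Definition ifamily := nat -> nat -> Prop.   (* F n a  <->  a \in F_n *)

Definition same_set (A B : nat -> Prop) : Prop := forall a, A a <-> B a.

Definition uniformly_ce (F : ifamily) : Prop :=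
  exists P : prog, forall a i, F i a <-> halts_on P (cpair a i).

Definition in_family (F : ifamily) (A : nat -> Prop) : Prop :=
  exists n, same_set (F n) A.

Definition is_min_index (F : ifamily) (A : nat -> Prop) (m : nat) : Prop :=
  same_set (F m) A /\ forall k, k < m -> ~ same_set (F k) A.

Definition enumeration (A : nat -> Prop) (f : nat -> nat) : Prop :=
  (forall k, A (f k)) /\ (forall a, A a -> exists k, f k = a).

Definition init_seg (f : nat -> nat) (n : nat) : seq nat := mkseq f n.

Definition peval (c : seq nat) (n : nat) : nat :=
  \sum_(i < size c) nth 0 c i * n ^ i.

(* Learner M (a machine computing a partial function on coded strings)
   converges on f to a correct index for A (w.r.t. F), and the total number of
   computation steps spent on f|0, ..., f|i (i the convergence point) is
   smaller than [bound]. *)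
Definition converges_within (F : ifamily) (M : prog) (A : nat -> Prop)
    (f : nat -> nat) (bound : nat) : Prop :=
  exists (i h : nat) (T : nat -> nat),
    (forall j, i <= j -> halts_on M (code_seq (init_seg f j)) /\
       forall y t, runs_in M (code_seq (init_seg f j)) y t -> y = h) /\
    same_set (F h) A /\
    (forall j, j <= i -> exists y, runs_in M (code_seq (init_seg f j)) y (T j)) /\
    \sum_(j < i.+1) T j < bound.

Definition PRT_learnable (F : ifamily) : Prop :=
  exists (M : prog) (p : seq nat),
    forall A, in_family F A ->
    forall m, is_min_index F A m ->
    forall f, enumeration A f ->
      converges_within F M A f (peval p m).

(* Main.v *)
Require Import Defs.
From mathcomp Require Import all_boot.
From Stdlib Require Import Classical ClassicalEpsilon.

Lemma exec_nil t s : exec [::] t s = s.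
Proof. by case: s => [[|pc] g]; case: t. Qed.

Lemma runs_nil x y t : runs_in [::] x y t -> y = x.
Proof. by case=> _ [_]; rewrite exec_nil. Qed.

Lemma runs0 M x y : runs_in M x y 0 -> M = [::].
Proof. by case: M => // a M [] /=; rewrite /halted /=; case: a => // r j; case: ifP. Qed.

Lemma cpair_mono a b b' : b < b' -> cpair a b < cpair a b'.
Proof.
move=> lt; rewrite /cpair -addnS; apply: leq_add => //; apply: half_leq; apply: leq_mul; rewrite ?ltnS leq_add2l ltnW //.
Qed.

Lemma code_rcons s a : code_seq s < code_seq (rcons s a).
Proof. elim: s => //= b s IH; rewrite ltnS; exact: cpair_mono. Qed.

Lemma conv_nil F A f b : ~ converges_within F [::] A f b.
Proof.
case=> i [h [T [H _]]].
have [_ Hi] := H i (leqnn i); have [_ Hi1] := H i.+1 (leqnSn i).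
have R x : runs_in [::] x x 0 by split; [|split] => //; rewrite exec_nil.
have e1 := Hi _ _ (R (code_seq (init_seg f i))).
have e2 := Hi1 _ _ (R (code_seq (init_seg f i.+1))).
have := code_rcons (init_seg f i) (f i).
by rewrite /init_seg -mkseqS -/(init_seg f i.+1) e2 -/(init_seg f i) e1 ltnn.
Qed.

Lemma conv_ne F (M : prog) A f b : M <> [::] -> converges_within F M A f b ->
  exists h, same_set (F h) A /\ forall j, b <= j ->
    halts_on M (code_seq (init_seg f j)) /\
    forall y t, runs_in M (code_seq (init_seg f j)) y t -> y = h.
Proof.
move=> Mn [i [h [T [H [Hs [HT Hb]]]]]]; exists h; split => // j bj; apply: H.
have : \sum_(j < i.+1) 1 <= \sum_(j < i.+1) T j.
  apply: leq_sum => k _; have [y Hy] := HT k (ltn_ord k).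
  case E: (T k) Hy => [|//] Hy; by case: (Mn (runs0 _ _ _ Hy)).
rewrite sum1_card card_ord => Hs'.
by apply: ltnW; apply: leq_trans bj; apply: leq_trans Hs' (ltnW Hb).
Qed.

Lemma min_index_ex F A n : same_set (F n) A -> exists m, is_min_index F A m.
Proof.
elim: n {-2}n (leqnn n) => [|N IH] n le Hn.
  by move: le Hn; rewrite leqn0 => /eqP -> Hn; exists 0; split.
case: (classic (exists k, k < n /\ same_set (F k) A)) => [[k [kn Hk]]|nk].
  by apply: (IH k) => //; rewrite -ltnS (leq_trans kn).
by exists n; split => // k kn Hk; apply: nk; exists k.
Qed.

Lemma enum_ex (A : nat -> Prop) x : A x -> forall K, exists f,
  enumeration A f /\ forall k, k < K -> f k = x.
Proof.
move=> Ax K.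
pose g k := if excluded_middle_informative (A k) then k else x.
exists (fun k => if k < K then x else g (k - K)); split; last by move=> k ->.
split.
  move=> k; case: ifP => // _; rewrite /g; by case: excluded_middle_informative.
move=> a Aa; exists (a + K); rewrite ltnNge leq_addl /= addnK /g.
by case: excluded_middle_informative.
Qed.

Theorem proposition3p2 (F : ifamily) :
  uniformly_ce F ->
  (exists A B, in_family F A /\ in_family F B /\ ~ same_set A B /\
               exists x, A x /\ B x) ->
  ~ PRT_learnable F.
Proof.
move=> _ [A [B [[nA HA] [[nB HB] [nAB [x [Ax Bx]]]]]]] [M [p Hl]].
have [mA HmA] := min_index_ex _ _ _ HA; have [mB HmB] := min_index_ex _ _ _ HB.
case: (classic (M = [::])) => [EM|Mn].
  have [f [Ef _]] := enum_ex _ _ Ax 0.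
  by apply: (@conv_nil F A f (peval p mA)); rewrite -EM; apply: Hl => //; exists nA.
pose K := peval p mA + peval p mB.
have [fA [EA FA]] := enum_ex _ _ Ax K; have [fB [EB FB]] := enum_ex _ _ Bx K.
have [hA [SA CA]] := conv_ne _ _ _ _ _ Mn (Hl A (ex_intro _ nA HA) mA HmA fA EA).
have [hB [SB CB]] := conv_ne _ _ _ _ _ Mn (Hl B (ex_intro _ nB HB) mB HmB fB EB).
have [HaltA OA] := CA K (leq_addr _ _); have [_ OB] := CB K (leq_addl _ _).
have Eseg : init_seg fA K = init_seg fB K.
  rewrite /init_seg /mkseq; apply/eq_in_map => k; rewrite mem_iota add0n => /andP[_ kK].
  by rewrite FA // FB.
case: HaltA => t [y Hy].
have e1 := OA _ _ Hy; rewrite Eseg in Hy; have e2 := OB _ _ Hy.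
apply: nAB => a; rewrite -(SA a) -(SB a) -e1 -e2; done.
Qed.
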